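(* Let $\bm A=(A_1,\dots,A_{d_1})$ be pairwise commuting Hermitian matrices in $M_n(\mathbb{C})$, let $\bm B=(B_1,\dots,B_{d_2})$ and $\bm C=(C_1,\dots,C_{d_2})$ be tuples of matrices in $M_n(\mathbb{C})$, and let $(\bm\lambda,\bm\nu)\in\mathbb{R}^{d_1}\times\mathbb{C}^{d_2}$. Assume $Z^2:=\sum_{i=1}^{d_1}(A_i-\lambda_iI)^2$ is invertible and let $Z$ be its positive definite square root. If $$\Big\|Z^{-1}\Big(\sum_{j=1}^{d_2}(B_j-\nu_jI)^\dagger C_j+C_j^\dagger(B_j-\nu_jI)+C_j^\dagger C_j\Big)Z^{-1}\Big\|\le K$$ for some $K<1$, then $$(1-K)^{1/2}\mu^{RQ}_{(\bm\lambda,\bm\nu)}(\bm A,\bm B)\le\mu^{RQ}_{(\bm\lambda,\bm\nu)}(\bm A,\bm B+\bm C)\le(1+K)^{1/2}\mu^{RQ}_{(\bm\lambda,\bm\nu)}(\bm A,\bm B),$$ where $\bm B+\bm C=(B_1+C_1,\dots,B_{d_2}+C_{d_2})$.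
   Context: For $\bm A=(A_1,\dots,A_{d_1})$ with $A_i\in M_n(\mathbb{C})$ Hermitian, $\bm B=(B_1,\dots,B_{d_2})$ with $B_j\in M_n(\mathbb{C})$ arbitrary, and $(\bm\lambda,\bm\nu)\in\mathbb{R}^{d_1}\times\mathbb{C}^{d_2}$, the right quadratic composite operator is $RQ_{(\bm\lambda,\bm\nu)}(\bm A,\bm B)=\sum_{i=1}^{d_1}(A_i-\lambda_iI)^2+\sum_{j=1}^{d_2}(B_j-\nu_jI)^\dagger(B_j-\nu_jI)$, and the right quadratic gap is $\mu^{RQ}_{(\bm\lambda,\bm\nu)}(\bm A,\bm B)=\sqrt{\lambda_{\min}\big(RQ_{(\bm\lambda,\bm\nu)}(\bm A,\bm B)\big)}$ (square root of the smallest eigenvalue). Matrix norms are operator norms. *)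

(* Defs.v *)
From HB Require Import structures.
From mathcomp Require Import all_boot all_order all_algebra.
From mathcomp Require Import classical_sets reals.
From mathcomp Require Import complex.
From mathcomp Require Import spectral.

Set Implicit Arguments.
Unset Strict Implicit.
Unset Printing Implicit Defensive.

Import Order.TTheory GRing.Theory Num.Theory.
Local Open Scope ring_scope.
Local Open Scope classical_set_scope.
Local Open Scope sesquilinear_scope.

Section Defs.
Variable R : realType.
Local Notation C := R[i].

Definition adjmx n (M : 'M[C]_n) : 'M[C]_n := M ^t*.

Definition is_hermitian n (M : 'M[C]_n) : Prop := adjmx M = M.

Definition is_posdef n (M : 'M[C]_n) : Prop :=
  is_hermitian M /\
  forall v : 'cV[C]_n, v != 0 ->
    ((0 : C) < ((v ^t* *m M *m v) 0 0)).

Definition vnorm n (v : 'cV[C]_n) : R :=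
  Num.sqrt (\sum_i (ComplexField.Normc.normc (v i 0)) ^+ 2).

Definition opnorm n (M : 'M[C]_n) : R :=
  sup [set vnorm (M *m v) | v in [set v : 'cV[C]_n | vnorm v <= 1]].

(* smallest eigenvalue of a (Hermitian) matrix: the least real part of its
   eigenvalues (all eigenvalues are real for Hermitian matrices) *)
Definition lambda_min n (M : 'M[C]_n) : R :=
  inf [set complex.Re a | a in [set a : C | eigenvalue M a]].

Definition RQ n d1 d2 (lam : 'I_d1 -> R) (nu : 'I_d2 -> C)
    (A : 'I_d1 -> 'M[C]_n) (B : 'I_d2 -> 'M[C]_n) : 'M[C]_n :=
  \sum_(i < d1) ((A i - (((lam i)%:C)%C)%:M) *m (A i - (((lam i)%:C)%C)%:M))
  + \sum_(j < d2) (adjmx (B j - (nu j)%:M) *m (B j - (nu j)%:M)).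

Definition muRQ n d1 d2 (lam : 'I_d1 -> R) (nu : 'I_d2 -> C)
    (A : 'I_d1 -> 'M[C]_n) (B : 'I_d2 -> 'M[C]_n) : R :=
  Num.sqrt (lambda_min (RQ lam nu A B)).

End Defs.

(* Main.v *)
Require Import Defs.
From HB Require Import structures.
From mathcomp Require Import all_boot all_order all_algebra.
From mathcomp Require Import classical_sets reals.
From mathcomp Require Import complex.
From mathcomp Require Import spectral.
From mathcomp Require Import lra.

Set Implicit Arguments. Unset Strict Implicit. Unset Printing Implicit Defensive.
Import Order.TTheory GRing.Theory Num.Theory.
Local Open Scope ring_scope.

Section Helpers.
Variable R : realType.
Local Notation C := R[i].
Local Notation normc := (@ComplexField.Normc.normc R).
Local Open Scope classical_set_scope.
Local Open Scope sesquilinear_scope.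

Lemma ReD (x y : C) : complex.Re (x + y) = complex.Re x + complex.Re y.
Proof. by case: x; case: y. Qed.
Lemma ReN (x : C) : complex.Re (- x) = - complex.Re x.
Proof. by case: x. Qed.
Lemma Re_sum n (F : 'I_n -> C) : complex.Re (\sum_i F i) = \sum_i complex.Re (F i).
Proof. by elim/big_rec2: _ => // i x y _ <-; rewrite ReD. Qed.
Lemma ReM_real (x y : C) : complex.Im y = 0 -> complex.Re (x * y) = complex.Re x * complex.Re y.
Proof. by case: x => a b; case: y => c d /= ->; rewrite mulr0 subr0. Qed.
Lemma ReM_realC (x : C) (r : R) : complex.Re (x * (r%:C)%C) = complex.Re x * r.
Proof. by rewrite ReM_real. Qed.
Lemma normc_Re (z : C) : `|complex.Re z| <= normc z.
Proof.
case: z => a b /=; rewrite -sqrtr_sqr; apply: ler_wsqrtr; rewrite lerDl sqr_ge0 //.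
Qed.
Lemma normCE (z : C) : `|z| = ((normc z)%:C)%C.
Proof. by case: z. Qed.
Lemma normc_ge0 (z : C) : 0 <= normc z.
Proof. by case: z => a b /=; rewrite sqrtr_ge0. Qed.
Lemma mulCconj (x : C) : x * (x^*)%C = (((normc x)^+2)%:C)%C.
Proof. by rewrite -normCK normCE rmorphXn. Qed.
Lemma mulconjC (x : C) : (x^*)%C * x = (((normc x)^+2)%:C)%C.
Proof. by rewrite mulrC mulCconj. Qed.
Lemma normc_eq0 (x : C) : (normc x == 0) = (x == 0).
Proof.
apply/eqP/eqP => [/ComplexField.Normc.eq0_normc //|->]; exact: ComplexField.Normc.normc0.
Qed.

Lemma trmxC_mul m n p (A : 'M[C]_(m, n)) (B : 'M[C]_(n, p)) : (A *m B)^t* = B^t* *m A^t*.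
Proof. by rewrite trmx_mul map_mxM. Qed.
Lemma trmxC_add m n (A B : 'M[C]_(m, n)) : (A + B)^t* = A^t* + B^t*.
Proof. by rewrite linearD map_mxD. Qed.
Lemma trmxC0 m n : (0 : 'M[C]_(m, n))^t* = 0.
Proof. by rewrite trmx0 map_mx0. Qed.
Lemma trmxC_sum m n I (r : seq I) (F : I -> 'M[C]_(m, n)) :
  (\sum_(i <- r) F i)^t* = \sum_(i <- r) (F i)^t*.
Proof. by elim/big_rec2: _ => [|i x y _ <-]; rewrite ?trmxC0 ?trmxC_add. Qed.

Definition nr n (u : 'rV[C]_n) : R := \sum_i (normc (u 0 i))^+2.
Definition nc n (x : 'cV[C]_n) : R := \sum_i (normc (x i 0))^+2.

Lemma nr_ge0 n (u : 'rV[C]_n) : 0 <= nr u.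
Proof. by apply: sumr_ge0 => i _; rewrite sqr_ge0. Qed.
Lemma nc_ge0 n (u : 'cV[C]_n) : 0 <= nc u.
Proof. by apply: sumr_ge0 => i _; rewrite sqr_ge0. Qed.

Lemma nrE n (u : 'rV[C]_n) : (u *m u^t*) 0 0 = ((nr u)%:C)%C.
Proof. by rewrite mxE rmorph_sum; apply: eq_bigr => i _; rewrite !mxE mulCconj. Qed.
Lemma ncE n (x : 'cV[C]_n) : (x^t* *m x) 0 0 = ((nc x)%:C)%C.
Proof. by rewrite mxE rmorph_sum; apply: eq_bigr => i _; rewrite !mxE mulconjC. Qed.
Lemma nc_trC n (u : 'rV[C]_n) : nc (u^t*) = nr u.
Proof.
apply: eq_bigr => i _; rewrite !mxE; congr (_ ^+ 2).
apply/(@complexI R); rewrite -!normCE; exact: norm_conjC.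
Qed.
Lemma nr_gt0 n (u : 'rV[C]_n) : u != 0 -> 0 < nr u.
Proof.
move=> un0; rewrite lt_def nr_ge0 andbT; apply: contraNneq un0 => h.
apply/eqP/rowP => i; rewrite mxE; apply/eqP; rewrite -normc_eq0 -sqrf_eq0; apply/eqP.
move: h; rewrite /nr => /eqP; rewrite psumr_eq0 => [/allP/(_ i)|]; last by move=> j _; rewrite sqr_ge0.
by rewrite mem_index_enum => /(_ isT) /eqP.
Qed.

Lemma vnormE n (x : 'cV[C]_n) : vnorm x = Num.sqrt (nc x).
Proof. by []. Qed.

Lemma csmx n (u : 'rV[C]_n) (z : 'cV[C]_n) :
  (normc ((u *m z) 0 0))^+2 <= nr u * nc z.
Proof.
have := CauchySchwarz (@dotmx _ n) u (z^t*).
rewrite /=; set g := (X in X -> _); rewrite /g !dotmxE trmxCK (nrE u) (ncE z).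
by case; rewrite normCE -rmorphXn -rmorphM /= lecR.
Qed.

Lemma nc_mul_bound n (Y : 'M[C]_n) (x : 'cV[C]_n) :
  nc (Y *m x) <= (\sum_i nr (row i Y)) * nc x.
Proof.
rewrite [in leLHS]/nc mulr_suml; apply: ler_sum => i _.
have -> : (Y *m x) i 0 = (row i Y *m x) 0 0.
  by rewrite -row_mul !mxE.
exact: csmx.
Qed.

Lemma normcC (r : R) : normc ((r%:C)%C) = `|r|.
Proof. by rewrite /= expr0n /= addr0 sqrtr_sqr. Qed.

Lemma vnormZ n (c : C) (x : 'cV[C]_n) : vnorm (c *: x) = normc c * vnorm x.
Proof.
rewrite !vnormE.
have -> : nc (c *: x) = normc c ^+ 2 * nc x.
  rewrite /nc mulr_sumr; apply: eq_bigr => i _.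
  by rewrite mxE ComplexField.Normc.normcM exprMn.
by rewrite sqrtrM ?sqr_ge0 // sqrtr_sqr ger0_norm ?normc_ge0.
Qed.

Definition opset n (M : 'M[C]_n) :=
  [set vnorm (M *m v) | v in [set v : 'cV[C]_n | vnorm v <= 1]].

Lemma opnormE n (M : 'M[C]_n) : opnorm M = sup (opset M).
Proof. by []. Qed.

Lemma vnorm0 n : vnorm (0 : 'cV[C]_n) = 0.
Proof.
rewrite vnormE /nc big1 ?sqrtr0 // => i _; rewrite mxE.
by rewrite ComplexField.Normc.normc0 expr0n.
Qed.

Lemma opset_has_sup n (M : 'M[C]_n) : has_sup (opset M).
Proof.
split.
  exists (vnorm (M *m 0)), 0 => //=; by rewrite vnorm0 ler01.
exists (Num.sqrt (\sum_i nr (row i M))) => y [x /= hx <-].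
rewrite vnormE; apply: ler_wsqrtr.
apply: (le_trans (nc_mul_bound M x)); apply: ler_piMr.
  by apply: sumr_ge0 => i _; exact: nr_ge0.
move: hx; rewrite vnormE => hx.
by rewrite -(sqr_sqrtr (nc_ge0 x)) exprn_ile1 ?sqrtr_ge0.
Qed.

Lemma opnorm_ge0 n (M : 'M[C]_n) : 0 <= opnorm M.
Proof.
rewrite opnormE; apply: (sup_upper_bound (opset_has_sup M)).
by exists 0 => /=; rewrite ?vnorm0 ?ler01 // mulmx0 vnorm0.
Qed.

Lemma opnorm_le n (M : 'M[C]_n) (x : 'cV[C]_n) : vnorm (M *m x) <= opnorm M * vnorm x.
Proof.
have [s0|sgt0] := eqVneq (vnorm x) 0.
  rewrite s0 mulr0 vnormE.
  have h : nc (M *m x) <= 0.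
    apply: (le_trans (nc_mul_bound M x)).
    have -> : nc x = 0.
      by move: s0; rewrite vnormE => /eqP; rewrite sqrtr_eq0 => h; apply/eqP; rewrite eq_le h nc_ge0.
    by rewrite mulr0.
  by rewrite ler0_sqrtr.
have spos : 0 < vnorm x by rewrite lt_def sgt0 sqrtr_ge0.
have vge : 0 <= vnorm x := ltW spos.
set c : C := (((vnorm x)^-1)%:C)%C.
have h1 : vnorm (c *: x) <= 1.
  by rewrite vnormZ normcC ger0_norm ?invr_ge0 ?vge // mulVf.
have h2 : opset M (vnorm (M *m (c *: x))) by exists (c *: x).
have := sup_upper_bound (opset_has_sup M) h2.
rewrite -opnormE -scalemxAr vnormZ normcC ger0_norm ?invr_ge0 ?vge //.
by rewrite mulrC ler_pdivrMr.
Qed.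


Definition Qf n (M : 'M[C]_n) (v : 'rV[C]_n) : C := (v *m M *m v^t*) 0 0.

Lemma QD n (M N : 'M[C]_n) v : Qf (M + N) v = Qf M v + Qf N v.
Proof. by rewrite /Qf mulmxDr mulmxDl mxE. Qed.
Lemma Q0 n (v : 'rV[C]_n) : Qf 0 v = 0.
Proof. by rewrite /Qf mulmx0 mul0mx mxE. Qed.
Lemma Qsum n I (r : seq I) (F : I -> 'M[C]_n) v :
  Qf (\sum_(i <- r) F i) v = \sum_(i <- r) Qf (F i) v.
Proof. by elim/big_rec2: _ => [|i x y _ <-]; rewrite ?Q0 ?QD. Qed.
Lemma Q_YY n (Y : 'M[C]_n) v : Qf (Y^t* *m Y) v = ((nr (v *m Y^t*))%:C)%C.
Proof. by rewrite /Qf -nrE trmxC_mul trmxCK !mulmxA. Qed.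

Lemma Q_bound n (Y : 'M[C]_n) (K : R) u :
  opnorm Y <= K -> normc (Qf Y u) <= K * nr u.
Proof.
move=> hK; have K0 : 0 <= K := le_trans (opnorm_ge0 Y) hK.
set z := Y *m u^t*.
have -> : Qf Y u = (u *m z) 0 0 by rewrite /Qf /z mulmxA.
have h := csmx u z.
have hw : vnorm z <= K * vnorm (u^t*).
  apply: (le_trans (opnorm_le Y (u^t*))); apply: ler_wpM2r => //; exact: sqrtr_ge0.
have hc : nc z <= K ^+ 2 * nr u.
  rewrite -(sqr_sqrtr (nc_ge0 z)) -vnormE -(nc_trC u) -(sqr_sqrtr (nc_ge0 (u^t*))).
  rewrite -vnormE -exprMn (@ler_pXn2r _ 2 isT) ?nnegrE //; last first.
    by rewrite mulr_ge0 // sqrtr_ge0.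
  exact: sqrtr_ge0.
have h2 : normc ((u *m z) 0 0) ^+ 2 <= (K * nr u) ^+ 2.
  apply: (le_trans h); rewrite exprMn mulrC -mulrA.
  by apply: (le_trans (ler_wpM2r (nr_ge0 u) hc)); rewrite !expr2 !mulrA.
move: h2; rewrite (@ler_pXn2r _ 2 isT) ?nnegrE //; first exact: normc_ge0.
by rewrite mulr_ge0 // nr_ge0.
Qed.


Lemma Qdiag n (w : 'rV[C]_n) (D : 'rV[C]_n) :
  (w *m diag_mx D *m w^t*) 0 0 = \sum_j D 0 j * (((normc (w 0 j))^+2)%:C)%C.
Proof.
rewrite mul_mx_diag mxE; apply: eq_bigr => j _.
by rewrite !mxE mulrAC mulCconj mulrC.
Qed.

Lemma lmin_lb n (M : 'M[C]_n) : M^t* = M ->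
  forall v, lambda_min M * nr v <= complex.Re (Qf M v).
Proof.
move=> hM v.
have hN : M \is normalmx by apply/normalmxP; rewrite hM.
have hMe : M = invmx (spectralmx M) *m diag_mx (spectral_diag M) *m spectralmx M := elimT (@orthomx_spectralP _ _ M) hN.
set P := spectralmx M in hMe; set D := spectral_diag M in hMe.
have PU : P \is unitarymx := spectral_unitarymx M.
have hPinv : invmx P = P^t* := invmx_unitary PU.
have hPP : P *m P^t* = 1%:M := elimT unitarymxP PU.
have hPtP : P^t* *m P = 1%:M by rewrite -hPinv mulVmx // spectral_unit.
rewrite hPinv in hMe.
have eigD i : eigenvalue M (D 0 i).
  apply/eigenvalueP; exists (row i P).
    rewrite -row_mul {1}hMe !mulmxA hPP mul1mx row_mul row_diag_mx -scalemxAl.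
    by rewrite -rowE.
  apply/negP => /eqP h0.
  have : row i (P *m P^t*) = 0 by rewrite row_mul h0 mul0mx.
  rewrite hPP => /rowP /(_ i); rewrite !mxE eqxx /= => /eqP.
  by rewrite oner_eq0.
have eigin a : eigenvalue M a -> exists i, a = D 0 i.
  move/eigenvalueP => [u hu un0].
  set w := u *m P^t*.
  have hw : w *m diag_mx D = a *: w.
    have := congr1 (mulmx^~ (P^t*)) hu.
    rewrite hMe !mulmxA -(mulmxA _ P) hPP mulmx1 -scalemxAl.
    by rewrite /w -!mulmxA.
  have wn0 : w != 0.
    apply: contraNneq un0 => w0.
    by rewrite -(mulmx1 u) -hPtP mulmxA -/w w0 mul0mx.
  clearbody w.
  have /existsP [i wi] : [exists i, w 0 i != 0].
    apply: contraNT wn0; rewrite negb_exists => /forallP h.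
    by apply/eqP/rowP => j; rewrite [RHS]mxE; apply/eqP; move: (h j); rewrite negbK.
  exists i; move: hw; rewrite mul_mx_diag => /rowP /(_ i); rewrite !mxE mulrC.
  by move=> /(mulIf wi) ->.
set S := [set complex.Re a | a in [set a : C | eigenvalue M a]].
have hlb : has_lbound S.
  exists (- \sum_i `|complex.Re (D 0 i)|) => x [a /= ha <-].
  have [i ->] := eigin a ha.
  rewrite lerNl; apply: (@le_trans _ _ `|complex.Re (D 0 i)|).
    by rewrite -normrN ler_norm.
  by rewrite (bigD1 i) //= lerDl sumr_ge0.
have hl i : lambda_min M <= complex.Re (D 0 i).
  by apply: (ge_inf hlb); exists (D 0 i); first exact: eigD.
set w := v *m P^t*.
have hQ : Qf M v = \sum_j D 0 j * (((normc (w 0 j))^+2)%:C)%C.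
  rewrite /Qf {1}hMe -Qdiag; congr (_ 0 0).
  by rewrite /w trmxC_mul trmxCK !mulmxA.
have hn : nr v = nr w.
  apply: (@complexI R); rewrite -!nrE /w trmxC_mul trmxCK mulmxA -(mulmxA v) hPtP.
  by rewrite mulmx1.
rewrite hQ Re_sum hn /nr mulr_sumr; apply: ler_sum => j _; rewrite ReM_realC.
by apply: ler_wpM2r => //; rewrite sqr_ge0.
Qed.


Lemma Q_eig n (M : 'M[C]_n) a v : v *m M = a *: v ->
  complex.Re (Qf M v) = complex.Re a * nr v.
Proof. by move=> hv; rewrite /Qf hv -scalemxAl mxE nrE ReM_realC. Qed.

Lemma lmin_n0 n (M : 'M[C]_n) : n = 0%N -> lambda_min M = 0.
Proof.
move=> n0; rewrite /lambda_min.
have -> : [set complex.Re a | a in [set a : C | eigenvalue M a]] = set0.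
  apply/seteqP; split => x // [a /= /eigenvalueP [u _ un0] _].
  apply/negP: un0; rewrite negbK; apply/eqP/rowP => i.
  by move: (ltn_ord i); rewrite {2}n0.
exact: inf0.
Qed.

Lemma herm_sum n d (Z : 'M[C]_n) (F : 'I_d -> 'M[C]_n) : Z^t* = Z ->
  (Z *m Z + \sum_j (F j)^t* *m F j)^t* = Z *m Z + \sum_j (F j)^t* *m F j.
Proof.
move=> hZ; rewrite trmxC_add trmxC_mul hZ trmxC_sum; congr (_ + _).
by apply: eq_bigr => j _; rewrite trmxC_mul trmxCK.
Qed.

End Helpers.

Lemma arith_low (R : realFieldType) (K a s x : R) : 0 <= K -> 0 <= s -> - (K * a) <= x -> x <= K * a -> 0 <= a -> 0 <= K * s ->
  (1 - K) * (a + s) <= a + s + x.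
Proof. move=> *. lra. Qed.
Lemma arith_up (R : realFieldType) (K a s x : R) : 0 <= K -> 0 <= s -> - (K * a) <= x -> x <= K * a -> 0 <= a -> 0 <= K * s ->
  a + s + x <= (1 + K) * (a + s).
Proof. move=> *. lra. Qed.

Local Open Scope sesquilinear_scope.

Theorem mainTheorem14 (R : realType) (n d1 d2 : nat)
  (A : 'I_d1 -> 'M[R[i]]_n) (B C : 'I_d2 -> 'M[R[i]]_n)
  (lam : 'I_d1 -> R) (nu : 'I_d2 -> R[i]) (Z : 'M[R[i]]_n) (K : R) :
  (forall k, is_hermitian (A k)) ->
  (forall k l, A k *m A l = A l *m A k) ->
  (\sum_(k < d1) ((A k - (((lam k)%:C)%C)%:M) *m (A k - (((lam k)%:C)%C)%:M)))
     \in unitmx ->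
  is_posdef Z ->
  Z *m Z = \sum_(k < d1) ((A k - (((lam k)%:C)%C)%:M) *m (A k - (((lam k)%:C)%C)%:M)) ->
  K < 1 ->
  opnorm (invmx Z *m
     (\sum_(j < d2) (adjmx (B j - (nu j)%:M) *m C j
                     + adjmx (C j) *m (B j - (nu j)%:M)
                     + adjmx (C j) *m C j))
     *m invmx Z) <= K ->
  Num.sqrt (1 - K) * muRQ lam nu A B <= muRQ lam nu A (fun j => B j + C j)
  /\ muRQ lam nu A (fun j => B j + C j) <= Num.sqrt (1 + K) * muRQ lam nu A B.
Proof.
move=> _ _ hWu [hZh _] hZZ hK1 hop.
have K0 : 0 <= K := le_trans (opnorm_ge0 _) hop.
rewrite /muRQ.
set M1 := RQ lam nu A B.
set M2 := RQ lam nu A (fun j => B j + C j).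
have [n0|npos] := posnP n.
  by rewrite !lmin_n0 // sqrtr0 !mulr0.
have hZ : Z^t* = Z by [].
pose SB := \sum_(j < d2) adjmx (B j - (nu j)%:M) *m (B j - (nu j)%:M).
set X := (\sum_(j < d2) (adjmx (B j - (nu j)%:M) *m C j + adjmx (C j) *m (B j - (nu j)%:M) + adjmx (C j) *m C j)) in hop.
have M1E : M1 = Z *m Z + SB by rewrite /M1 /RQ hZZ.
have M2E : M2 = Z *m Z + SB + X.
  rewrite /M2 /RQ hZZ -addrA -big_split; congr (_ + _); apply: eq_bigr => j _ /=.
  rewrite /adjmx addrAC trmxC_add !mulmxDl !mulmxDr.
  by rewrite !addrA.
have M1h : M1^t* = M1 by rewrite /M1 /RQ -hZZ /adjmx herm_sum.
have M2h : M2^t* = M2 by rewrite /M2 /RQ -hZZ /adjmx herm_sum.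
have Zu : Z \in unitmx by move: hWu; rewrite -hZZ unitmx_mul => /andP[].
set Y := invmx Z *m X *m invmx Z.
have XE : X = Z *m Y *m Z.
  by rewrite /Y !mulmxA (mulmxV Zu) mul1mx -mulmxA (mulVmx Zu) mulmx1.
have qW v : Qf (Z *m Z) v = ((nr (v *m Z))%:C)%C.
  by have := Q_YY Z v; rewrite hZ.
have qS v : 0 <= complex.Re (Qf SB v).
  rewrite /SB Qsum Re_sum; apply: sumr_ge0 => j _; rewrite /adjmx.
  by rewrite Q_YY /=; exact: nr_ge0.
have qX v : `|complex.Re (Qf X v)| <= K * nr (v *m Z).
  apply: (le_trans (normc_Re _)).
  have -> : Qf X v = Qf Y (v *m Z).
    by rewrite XE /Qf trmxC_mul hZ !mulmxA.
  exact: Q_bound.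
have low v : (1 - K) * complex.Re (Qf M1 v) <= complex.Re (Qf M2 v).
  rewrite M1E M2E !QD !ReD qW /=.
  have := qS v; have := qX v; rewrite ler_norml => /andP[h1 h2] h3.
  have := nr_ge0 (v *m Z) => h4.
  have h5 := mulr_ge0 K0 h3.
  exact: arith_low.
have up v : complex.Re (Qf M2 v) <= (1 + K) * complex.Re (Qf M1 v).
  rewrite M1E M2E !QD !ReD qW /=.
  have := qS v; have := qX v; rewrite ler_norml => /andP[h1 h2] h3.
  have := nr_ge0 (v *m Z) => h4.
  have h5 := mulr_ge0 K0 h3.
  exact: arith_up.
have K1 : 0 <= 1 - K by rewrite subr_ge0 ltW.
have K2 : 0 < 1 + K by rewrite ltr_wpDr.
have L1 : (1 - K) * lambda_min M1 <= lambda_min M2.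
  apply: lb_le_inf.
    have [a ha] := eigenvalue_closed M2 npos.
    by exists (complex.Re a), a.
  move=> x [a /= /eigenvalueP [v hv vn0] <-].
  have vp := nr_gt0 vn0.
  rewrite -(ler_pM2r vp) -(Q_eig hv).
  apply: le_trans (low v); rewrite -mulrA; apply: ler_wpM2l => //.
  exact: lmin_lb.
have L2' : lambda_min M2 / (1 + K) <= lambda_min M1.
  apply: lb_le_inf.
    have [a ha] := eigenvalue_closed M1 npos.
    by exists (complex.Re a), a.
  move=> x [a /= /eigenvalueP [v hv vn0] <-].
  have vp := nr_gt0 vn0.
  have h1 := lmin_lb M2h v; have h2 := up v; have h3 := Q_eig hv.
  move: h1 h2 h3 vp.
  generalize (lambda_min M2) (complex.Re (Qf M2 v)) (complex.Re (Qf M1 v)) (nr v).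
  move=> l q2 q1 r h1 h2 h3 vp; rewrite h3 in h2.
  rewrite (ler_pdivrMr _ _ K2) -(ler_pM2r vp).
  apply: (le_trans h1); apply: (le_trans h2).
  by rewrite [complex.Re a * (1 + K)]mulrC -mulrA.
have L2 : lambda_min M2 <= (1 + K) * lambda_min M1.
  move: L2'; generalize (lambda_min M2) (lambda_min M1) => l2 l1.
  by rewrite (ler_pdivrMr _ _ K2) mulrC.
move: L1 L2; generalize (lambda_min M1) (lambda_min M2) => l1 l2 L1 L2.
split.
  by rewrite -(sqrtrM _ K1); apply: ler_wsqrtr.
by rewrite -(sqrtrM _ (ltW K2)); apply: ler_wsqrtr.
Qed.
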